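(* Let $g$ be of $n^\alpha$ type. Let $X_N$ have distribution $\mathcal P_{N^\beta\varphi}$ for some $\beta>\alpha$ and $\varphi\ge0$. Then for any $r_0<\beta/\alpha$ and $\delta>0$, $$\lim_{N\to\infty}N^{-r_0}\ln P\big[|N^{-\beta/\alpha}X_N-\varphi^{1/\alpha}|\ge\delta\big]=-\infty .$$
   Context: $g:\mathbb N_0\to[0,\infty)$ with $g(n)=0$ iff $n=0$, $|g(n+1)-g(n)|\le g^*$, nondecreasing, $\lim_{n\to\infty}g(n)/n^\alpha=1$ with $\alpha\in(0,1]$. $g(0)!=1$, $g(n)!=\prod_{i=1}^ng(i)$, $Z(\phi)=\sum_n\phi^n/g(n)!$, $\mathcal P_\phi(n)=\phi^n/(g(n)!Z(\phi))$ for $\phi\ge0$. *)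

(* Defs.v *)
From Stdlib Require Import Reals ClassicalDescription.
From Coquelicot Require Import Coquelicot.
Open Scope R_scope.

(* Real power x^y with the convention 0^y = 0 (x <= 0 gives 0);
   for x > 0 it is Rpower x y = exp (y ln x). *)
Definition rpow (x y : R) : R :=
  if Rle_dec x 0 then 0 else Rpower x y.

Definition n_alpha_type (g : nat -> R) (alpha : R) : Prop :=
  0 < alpha <= 1 /\
  (forall n, 0 <= g n) /\
  (forall n, g n = 0 <-> n = 0%nat) /\
  (exists gstar : R, forall n, Rabs (g (S n) - g n) <= gstar) /\
  (forall n, g n <= g (S n)) /\
  is_lim_seq (fun n => g n / rpow (INR n) alpha) 1.

Fixpoint gfact (g : nat -> R) (n : nat) : R :=
  match n with
  | O => 1
  | S m => gfact g m * g (S m)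
  end.

Definition Zpart (g : nat -> R) (phi : R) : R :=
  Series (fun n => phi ^ n / gfact g n).

Definition Pdist (g : nat -> R) (phi : R) (n : nat) : R :=
  phi ^ n / (gfact g n * Zpart g phi).

Definition Prob (g : nat -> R) (phi : R) (A : nat -> Prop) : R :=
  Series (fun n => match excluded_middle_informative (A n) with
                   | left _ => Pdist g phi n
                   | right _ => 0 end).

(* u N = N^{-r} * ln (p N) tends to -infinity, with the convention ln 0 = -oo
   (so terms with p N = 0 are equal to -oo and are below every bound). *)
Definition scaled_log_to_minus_infty (r : R) (p : nat -> R) : Prop :=
  forall M : R, exists N0 : nat, forall N : nat, (N0 <= N)%nat ->
    p N = 0 \/ (0 < p N /\ rpow (INR N) (- r) * ln (p N) <= M).

(* Main.v *)
Require Import Defs.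
From Stdlib Require Import Reals Lra Lia ClassicalDescription.
From Coquelicot Require Import Coquelicot.
Open Scope R_scope.

Definition tt (g : nat -> R) (lam : R) (n : nat) : R := lam ^ n / gfact g n.

Lemma Series_zero (a : nat -> R) : (forall n, a n = 0) -> Series a = 0.
Proof.
  intros H. rewrite (Series_ext a (fun n => 0 * a n)).
  - rewrite Series_scal_l; ring.
  - intros n; rewrite H; ring.
Qed.

Lemma gfact_pos g : (forall n, (0 < n)%nat -> 0 < g n) -> forall n, 0 < gfact g n.
Proof.
  intros H n; induction n; simpl; [lra|].
  apply Rmult_lt_0_compat; auto. apply H; lia.
Qed.

Lemma g_mono g : (forall n, g n <= g (S n)) -> forall a b, (a <= b)%nat -> g a <= g b.
Proof.
  intros H a b Hab; induction Hab; [lra|]. eapply Rle_trans; eauto.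
Qed.

Lemma tt_pos g lam : (forall n, (0 < n)%nat -> 0 < g n) -> 0 < lam -> forall n, 0 < tt g lam n.
Proof.
  intros H Hl n; unfold tt. apply Rdiv_lt_0_compat. apply pow_lt; auto. apply gfact_pos; auto.
Qed.

Lemma tt_S g lam n : (forall n, (0 < n)%nat -> 0 < g n) ->
  tt g lam (S n) = tt g lam n * (lam / g (S n)).
Proof.
  intros H; unfold tt; simpl.
  assert (0 < g (S n)) by (apply H; lia).
  assert (0 < gfact g n) by (apply gfact_pos; auto).
  field; lra.
Qed.

Lemma tt_up g lam m : (forall n, (0 < n)%nat -> 0 < g n) -> (forall n, g n <= g (S n)) -> 0 < lam ->
  forall j, tt g lam (m + j) <= tt g lam m * (lam / g (S m)) ^ j.
Proof.
  intros H Hm Hl j; induction j.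
  - rewrite Nat.add_0_r; simpl; lra.
  - rewrite Nat.add_succ_r, tt_S by auto. simpl.
    assert (0 < g (S m)) by (apply H; lia).
    assert (g (S m) <= g (S (m + j))) by (apply g_mono; auto; lia).
    assert (0 < g (S (m+j))) by lra.
    assert (0 <= lam / g (S (m+j)) <= lam / g (S m)).
    { split. apply Rlt_le, Rdiv_lt_0_compat; lra.
      apply Rmult_le_compat_l; [lra|]. apply Rinv_le_contravar; lra. }
    assert (0 <= tt g lam (m+j)) by (apply Rlt_le, tt_pos; auto).
    assert (0 <= (lam / g (S m)) ^ j) by (apply pow_le; apply Rlt_le, Rdiv_lt_0_compat; lra).
    assert (0 <= tt g lam m) by (apply Rlt_le, tt_pos; auto).
    apply Rle_trans with (tt g lam m * (lam / g (S m)) ^ j * (lam / g (S (m + j)))).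
    apply Rmult_le_compat_r; lra.
    replace (tt g lam m * (lam / g (S m) * (lam / g (S m)) ^ j)) with
      (tt g lam m * (lam / g (S m)) ^ j * (lam / g (S m))) by ring.
    apply Rmult_le_compat_l. apply Rmult_le_pos; auto. lra.
Qed.

Lemma tt_down g lam m' : (forall n, (0 < n)%nat -> 0 < g n) -> (forall n, g n <= g (S n)) -> 0 < lam ->
  forall j n, (n + j = m')%nat -> tt g lam n <= tt g lam m' * (g m' / lam) ^ j.
Proof.
  intros H Hm Hl j; induction j; intros n Hn.
  - rewrite Nat.add_0_r in Hn; subst; simpl; lra.
  - assert (Hs : (S n + j = m')%nat) by lia.
    specialize (IHj _ Hs).
    rewrite tt_S in IHj by auto.
    assert (0 < g (S n)) by (apply H; lia).
    assert (g (S n) <= g m') by (apply g_mono; auto; lia).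
    assert (0 < tt g lam n) by (apply tt_pos; auto).
    assert (0 <= tt g lam m' * (g m' / lam) ^ j).
    { apply Rmult_le_pos. apply Rlt_le, tt_pos; auto. apply pow_le. apply Rlt_le, Rdiv_lt_0_compat; lra. }
    simpl.
    replace (tt g lam n) with (tt g lam n * (lam / g (S n)) * (g (S n) / lam)) by (field; lra).
    replace (tt g lam m' * (g m' / lam * (g m' / lam) ^ j)) with
      (tt g lam m' * (g m' / lam) ^ j * (g m' / lam)) by ring.
    apply Rmult_le_compat; auto.
    apply Rmult_le_pos; [lra|]. apply Rlt_le, Rdiv_lt_0_compat; lra.
    apply Rlt_le, Rdiv_lt_0_compat; lra.
    apply Rmult_le_compat_r. apply Rlt_le, Rinv_0_lt_compat; lra. auto.
Qed.

Lemma sum_ge_last (a : nat -> R) m : (forall n, 0 <= a n) -> a m <= sum_f_R0 a m.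
Proof.
  intros H; destruct m; simpl; [lra|].
  assert (0 <= sum_f_R0 a m) by (apply cond_pos_sum; auto). lra.
Qed.

Lemma Series_ge_term (a : nat -> R) m : (forall n, 0 <= a n) -> ex_series a -> a m <= Series a.
Proof.
  intros H He.
  rewrite (Series_incr_n a (S m)) by (auto; lia).
  simpl pred.
  assert (0 <= Series (fun k => a (S m + k)%nat)).
  { rewrite <- (Series_zero (fun _ => 0)) by auto.
    apply Series_le. intros; split; [lra| apply H].
    apply ex_series_incr_n; auto. }
  pose proof (sum_ge_last a m H). lra.
Qed.

Lemma sum_le_const (a : nat -> R) E n : (forall k, (k <= n)%nat -> a k <= E) -> sum_f_R0 a n <= INR (S n) * E.
Proof.
  intros H; induction n; simpl.
  - specialize (H 0%nat (le_n _)); simpl in H; lra.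
  - assert (IH := IHn (fun k Hk => H k ltac:(lia))).
    specialize (H (S n) (le_n _)). simpl sum_f_R0. change (sum_f_R0 a n + a (S n) <= INR (S (S n)) * E). rewrite (S_INR (S n)). lra.
Qed.

Lemma ex_series_tt g lam m : (forall n, (0 < n)%nat -> 0 < g n) -> (forall n, g n <= g (S n)) -> 0 < lam ->
  lam < g (S m) -> ex_series (tt g lam).
Proof.
  intros H Hm Hl Hlt.
  apply (ex_series_incr_n _ m).
  assert (0 < g (S m)) by lra.
  assert (Hq : 0 <= lam / g (S m) < 1).
  { split. apply Rlt_le, Rdiv_lt_0_compat; lra.
    apply (Rmult_lt_reg_r (g (S m))); auto. unfold Rdiv; rewrite Rmult_assoc, Rinv_l; lra. }
  apply (@ex_series_le R_AbsRing R_CompleteNormedModule _ (fun j => tt g lam m * (lam / g (S m)) ^ j)).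
  - intros n. change norm with Rabs. simpl. rewrite Rabs_pos_eq.
    apply tt_up; auto. apply Rlt_le, tt_pos; auto.
  - apply (ex_series_scal_l (K := R_AbsRing) (V := R_NormedModule)).
    apply ex_series_geom. rewrite Rabs_pos_eq; lra.
Qed.

Lemma exp_le_mono x y : x <= y -> exp x <= exp y.
Proof. intros [H|H]; [apply Rlt_le, exp_increasing; auto | subst; lra]. Qed.

Lemma pow_le_Rpower q j X : 0 < q < 1 -> X <= INR j -> q ^ j <= Rpower q X.
Proof.
  intros Hq HX. rewrite <- Rpower_pow by lra. unfold Rpower.
  apply exp_le_mono. assert (ln q < 0).
  { rewrite <- ln_1. apply ln_increasing; lra. }
  nra.
Qed.

Lemma ratio_le a b Z r : 0 <= a -> 0 < b -> b <= Z -> a <= b * r -> a / Z <= r.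
Proof.
  intros Ha Hb HZ H.
  apply Rle_trans with (a / b).
  - apply Rmult_le_compat_l; auto. apply Rinv_le_contravar; lra.
  - apply (Rmult_le_reg_r b); auto. unfold Rdiv; rewrite Rmult_assoc, Rinv_l; lra.
Qed.

Lemma core g (A : nat -> Prop) lam c delta T q X m L m' :
  (forall n, (0<n)%nat -> 0 < g n) -> (forall n, g n <= g (S n)) -> 0 < lam -> 0 < q < 1 -> 0 <= X ->
  lam / g (S m) <= q -> g m' / lam <= q -> X <= INR L ->
  INR m + INR L <= (c+delta) * T -> (c-delta) * T + X <= INR m' -> (0 < m + L)%nat -> (0 < m')%nat ->
  (forall n, A n -> (c+delta)*T <= INR n \/ INR n <= (c-delta)*T) ->
  0 <= Prob g lam A <= Rpower q X * (INR (m+L) + /(1-q)).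
Proof.
  intros Hg Hmono Hl Hq HX Hup Hdn HXL HmL Hm' HK Hm'0 HA.
  set (e := fun n => match excluded_middle_informative (A n) with
                   | left _ => Pdist g lam n
                   | right _ => 0 end).
  change (0 <= Series e <= Rpower q X * (INR (m+L) + /(1-q))).
  assert (HgSm : 0 < g (S m)) by (apply Hg; lia).
  assert (Hlt : lam < g (S m)).
  { apply (Rmult_le_compat_r (g (S m))) in Hup; [|lra].
    unfold Rdiv in Hup; rewrite Rmult_assoc, Rinv_l in Hup; nra. }
  assert (Hex : ex_series (tt g lam)) by (eapply ex_series_tt; eauto).
  set (Z := Series (tt g lam)).
  assert (Htt : forall n, 0 < tt g lam n) by (apply tt_pos; auto).
  assert (HZ : forall n, tt g lam n <= Z).
  { intros n; apply Series_ge_term; auto. intros; apply Rlt_le; auto. }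
  assert (HZp : 0 < Z) by (specialize (HZ 0%nat); specialize (Htt 0%nat); lra).
  assert (HP : forall n, Pdist g lam n = tt g lam n / Z).
  { intros n; unfold Pdist, Zpart. change (Series (fun n0 => lam ^ n0 / gfact g n0)) with Z.
    unfold tt. pose proof (gfact_pos g Hg n). field; split; lra. }
  assert (HPn : forall n, 0 <= Pdist g lam n).
  { intros n; rewrite HP. apply Rlt_le, Rdiv_lt_0_compat; auto. }
  assert (He0 : forall n, 0 <= e n <= Pdist g lam n).
  { intros n; unfold e; destruct excluded_middle_informative; split; auto; lra. }
  assert (Hexe : ex_series e).
  { apply (@ex_series_le R_AbsRing R_CompleteNormedModule _ (Pdist g lam)).
    - intros n. change norm with Rabs. simpl. rewrite Rabs_pos_eq; apply He0.
    - apply (ex_series_ext (fun n => scal (/Z) (tt g lam n))).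
      + intros n; rewrite HP. change scal with Rmult. simpl. unfold Rdiv; ring.
      + apply (ex_series_scal_l (K := R_AbsRing) (V := R_NormedModule)); auto. }
  split.
  { rewrite <- (Series_zero (fun _ => 0)) by auto. apply Series_le; auto.
    intros; split; [lra|apply He0]. }
  set (E := Rpower q X).
  assert (HE : 0 < E) by (unfold E, Rpower; apply exp_pos).
  rewrite (Series_incr_n e (m+L)) by auto.
  assert (B1 : sum_f_R0 e (pred (m+L)) <= INR (m+L) * E).
  { replace (INR (m+L)) with (INR (S (pred (m+L)))) by (f_equal; lia).
    apply sum_le_const. intros k Hk. unfold e.
    destruct excluded_middle_informative as [Ak|]; [|lra].
    destruct (HA k Ak) as [Hu|Hd].
    - exfalso. assert (INR k < INR (m+L)) by (apply lt_INR; lia).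
      rewrite plus_INR in H. lra.
    - assert (Hkm : (k <= m')%nat) by (apply INR_le; lra).
      rewrite HP. apply ratio_le with (tt g lam m'); auto. apply Rlt_le; auto.
      eapply Rle_trans. apply (tt_down g lam m' Hg Hmono Hl (m' - k) k); lia.
      apply Rmult_le_compat_l. apply Rlt_le; auto.
      apply Rle_trans with (q ^ (m' - k)).
      + apply pow_incr. split; auto. apply Rlt_le, Rdiv_lt_0_compat; auto.
      + apply pow_le_Rpower; auto. rewrite minus_INR; auto. lra. }
  assert (B2 : Series (fun k => e (m + L + k)%nat) <= E * / (1 - q)).
  { rewrite <- Series_geom by (rewrite Rabs_pos_eq; lra).
    rewrite <- Series_scal_l.
    apply Series_le.
    - intros k. split; [apply He0|]. eapply Rle_trans; [apply He0|].
      rewrite HP. apply ratio_le with (tt g lam m); auto. apply Rlt_le; auto.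
      replace (m + L + k)%nat with (m + (L + k))%nat by lia.
      eapply Rle_trans. apply tt_up; auto.
      apply Rmult_le_compat_l. apply Rlt_le; auto.
      apply Rle_trans with (q ^ (L + k)).
      + apply pow_incr. split; auto. apply Rlt_le, Rdiv_lt_0_compat; auto.
      + rewrite pow_add. apply Rmult_le_compat_r. apply pow_le; lra.
        apply pow_le_Rpower; auto.
    - apply (ex_series_scal_l (K := R_AbsRing) (V := R_NormedModule)).
      apply ex_series_geom. rewrite Rabs_pos_eq; lra. }
  lra.
Qed.

Lemma rpow_pos x y : 0 < x -> rpow x y = Rpower x y.
Proof. intros H; unfold rpow; destruct Rle_dec; [lra|auto]. Qed.

Lemma rpow_0 y : rpow 0 y = 0.
Proof. unfold rpow; destruct Rle_dec; [auto|lra]. Qed.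

Lemma Rpower_1_base a : Rpower 1 a = 1.
Proof. unfold Rpower; rewrite ln_1, Rmult_0_r, exp_0; auto. Qed.

Lemma Rpower_pos x y : 0 < Rpower x y.
Proof. unfold Rpower; apply exp_pos. Qed.

Lemma ln_tangent Y W : 0 < Y -> 0 < W -> ln Y <= ln W + Y / W - 1.
Proof.
  intros HY HW. pose proof (exp_ineq1_le (ln (Y / W))).
  rewrite exp_ln in H by (apply Rdiv_lt_0_compat; auto).
  rewrite ln_div in H by auto. lra.
Qed.

Lemma rpow_large e X : 0 < e -> exists N0, forall N, (N0 <= N)%nat -> 0 < INR N /\ X <= Rpower (INR N) e.
Proof.
  intros He.
  set (Y := Rpower (Rmax X 1) (/ e)).
  assert (HY : 0 < Y) by apply Rpower_pos.
  destruct (nfloor_ex Y (Rlt_le _ _ HY)) as [n Hn].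
  exists (S n). intros N HN.
  assert (INR (S n) <= INR N) by (apply le_INR; auto).
  rewrite S_INR in H.
  split; [lra|].
  apply Rle_trans with (Rpower Y e).
  - unfold Y. rewrite Rpower_mult, Rinv_l by lra. rewrite Rpower_1 by (apply Rlt_le_trans with 1; [lra|apply Rmax_r]).
    apply Rmax_l.
  - apply Rle_Rpower_l; lra.
Qed.

Theorem mainTheorem13 (g : nat -> R) (alpha beta phi : R) :
  n_alpha_type g alpha ->
  beta > alpha ->
  0 <= phi ->
  forall r0 delta : R, r0 < beta / alpha -> delta > 0 ->
  scaled_log_to_minus_infty r0
    (fun N : nat =>
       Prob g (rpow (INR N) beta * phi)
         (fun n : nat =>
            Rabs (rpow (INR N) (- (beta / alpha)) * INR n - rpow phi (1 / alpha))
              >= delta)).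
Proof.
  intros Hg Hab Hphi r0 delta Hr0 Hd M.
  destruct Hg as (Ha & Hg0 & Hgz & _ & Hmono & Hlim).
  assert (Hgpos : forall n, (0 < n)%nat -> 0 < g n).
  { intros n Hn. destruct (Hg0 n) as [H|H]; auto. symmetry in H. apply Hgz in H; lia. }
  destruct Hphi as [Hphi|Hphi0].
  2:{ subst phi. exists 0%nat. intros N _. left. unfold Prob. apply Series_zero.
      intros n. destruct excluded_middle_informative as [Hev|]; auto.
      rewrite Rmult_0_r. destruct n.
      - exfalso. rewrite rpow_0 in Hev. simpl in Hev.
        rewrite Rmult_0_r, Rminus_0_r, Rabs_R0 in Hev. lra.
      - unfold Pdist. simpl. unfold Rdiv. ring. }
  set (s := beta / alpha).
  assert (Hs : 0 < s) by (unfold s; apply Rdiv_lt_0_compat; lra).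
  assert (Hsa : s * alpha = beta) by (unfold s; field; lra).
  set (c := Rpower phi (1 / alpha)).
  assert (Hc : 0 < c) by apply Rpower_pos.
  assert (Hcphi : rpow phi (1/alpha) = c) by (apply rpow_pos; auto).
  assert (Hca : Rpower c alpha = phi).
  { unfold c. rewrite Rpower_mult. replace (1 / alpha * alpha) with 1 by (field; lra).
    apply Rpower_1; auto. }
  set (d' := Rmin delta c / 2).
  assert (Hd'1 : 0 < d') by (unfold d'; apply Rmin_case; lra).
  assert (Hd'2 : d' <= delta / 2) by (unfold d'; pose proof (Rmin_l delta c); lra).
  assert (Hd'3 : d' <= c / 2) by (unfold d'; pose proof (Rmin_r delta c); lra).
  set (ru := Rpower ((c + delta/2)/c) alpha).
  assert (Hru : 1 < ru).
  { unfold ru. rewrite <- (Rpower_1_base alpha). apply Rlt_Rpower_l. lra.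
    split; [lra|]. apply (Rmult_lt_reg_r c); auto. unfold Rdiv; rewrite Rmult_assoc, Rinv_l; lra. }
  set (rl := Rpower ((c - d')/c) alpha).
  assert (Hrl : 0 < rl < 1).
  { split. apply Rpower_pos. unfold rl. rewrite <- (Rpower_1_base alpha). apply Rlt_Rpower_l. lra.
    split. apply Rdiv_lt_0_compat; lra.
    apply (Rmult_lt_reg_r c); auto. unfold Rdiv; rewrite Rmult_assoc, Rinv_l; lra. }
  set (eta := Rmin ((1 - /ru)/2) ((/rl - 1)/2)).
  assert (Hiru : /ru < 1) by (rewrite <- Rinv_1; apply Rinv_lt_contravar; lra).
  assert (Hirl : 1 < /rl) by (rewrite <- Rinv_1; apply Rinv_lt_contravar; lra).
  assert (Heta : 0 < eta) by (unfold eta; apply Rmin_case; lra).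
  assert (Heta1 : eta <= (1 - /ru)/2) by apply Rmin_l.
  assert (Heta2 : eta <= (/rl - 1)/2) by apply Rmin_r.
  assert (Hup1 : (ru + 1)/2 <= (1 - eta) * ru).
  { assert (ru * /ru = 1) by (field; lra). nra. }
  assert (Hlo1 : (1 + eta) * rl <= (1 + rl)/2).
  { assert (rl * /rl = 1) by (field; lra). nra. }
  set (q := Rmax (2/(ru+1)) ((1+rl)/2)).
  assert (Hq1 : 2/(ru+1) <= q) by apply Rmax_l.
  assert (Hq2 : (1+rl)/2 <= q) by apply Rmax_r.
  assert (Hq : 0 < q < 1).
  { split. apply Rlt_le_trans with ((1+rl)/2); lra.
    unfold q; apply Rmax_lub_lt; [|lra].
    apply (Rmult_lt_reg_r (ru+1)); [lra|]. unfold Rdiv; rewrite Rmult_assoc, Rinv_l; lra. }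
  apply is_lim_seq_spec in Hlim.
  destruct (Hlim (mkposreal eta Heta)) as [ne Hne]. simpl in Hne.
  assert (Hgb : forall n, (ne <= n)%nat -> (0 < n)%nat ->
             (1 - eta) * Rpower (INR n) alpha <= g n <= (1 + eta) * Rpower (INR n) alpha).
  { intros n H1 H2. specialize (Hne n H1).
    assert (HI : 0 < INR n) by (apply lt_0_INR; auto).
    rewrite rpow_pos in Hne by auto.
    pose proof (Rpower_pos (INR n) alpha) as HP.
    apply Rabs_def2 in Hne. destruct Hne as [H3 H4].
    assert (Hgn : g n / Rpower (INR n) alpha * Rpower (INR n) alpha = g n) by (field; lra).
    split; nra. }
  set (a := - ln q).
  assert (Hapos : 0 < a).
  { unfold a. assert (ln q < 0) by (rewrite <- ln_1; apply ln_increasing; lra). lra. }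
  set (D := / (1 - q)).
  assert (HD : 0 < D) by (unfold D; apply Rinv_0_lt_compat; lra).
  set (W := 4 * (c + delta) / (a * delta)).
  assert (HW : 0 < W) by (unfold W; apply Rdiv_lt_0_compat; nra).
  assert (HWc : (c + delta) / W = a * delta / 4) by (unfold W; field; split; lra).
  set (A0 := a + ln W + D / W - 1).
  set (b := a * delta / 8).
  assert (Hb : 0 < b) by (unfold b; nra).
  set (T0 := Rmax ((INR ne + 2) / (c - d')) (Rmax (2 / delta) (A0 / b))).
  destruct (rpow_large s T0 Hs) as [N1 HN1].
  assert (Hsr : 0 < s - r0) by (unfold s; lra).
  destruct (rpow_large (s - r0) (- M / b) Hsr) as [N2 HN2].
  exists (Nat.max N1 N2). intros N HN.
  destruct (HN1 N ltac:(lia)) as [HNpos HT0].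
  destruct (HN2 N ltac:(lia)) as [_ HMb].
  set (T := Rpower (INR N) s) in *.
  assert (HT : 0 < T) by apply Rpower_pos.
  assert (HT1 : (INR ne + 2) / (c - d') <= T) by (eapply Rle_trans; [|apply HT0]; apply Rmax_l).
  assert (HT2 : 2 / delta <= T) by (eapply Rle_trans; [|apply HT0]; eapply Rle_trans; [|apply Rmax_r]; apply Rmax_l).
  assert (HT3 : A0 / b <= T) by (eapply Rle_trans; [|apply HT0]; eapply Rle_trans; [|apply Rmax_r]; apply Rmax_r).
  assert (HT1' : INR ne + 2 <= (c - d') * T).
  { apply (Rmult_le_compat_l (c - d')) in HT1; [|lra]. rewrite <- HT1. right; field; lra. }
  assert (HT2' : 2 <= delta * T).
  { apply (Rmult_le_compat_l delta) in HT2; [|lra]. rewrite <- HT2. right; field; lra. }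
  assert (HT3' : A0 <= b * T).
  { apply (Rmult_le_compat_l b) in HT3; [|lra]. rewrite <- HT3. right; field; lra. }
  rewrite !(rpow_pos (INR N)) by auto. rewrite Rpower_Ropp, Hcphi. fold T.
  set (lam := Rpower (INR N) beta * phi).
  assert (Hlam : Rpower (c * T) alpha = lam).
  { rewrite <- Rpower_mult_distr by auto. rewrite Hca. unfold T. rewrite Rpower_mult, Hsa.
    unfold lam; ring. }
  assert (Hlp : 0 < lam) by (rewrite <- Hlam; apply Rpower_pos).
  destruct (nfloor_ex ((c + delta/2) * T) ltac:(nra)) as [m Hm].
  destruct (nfloor_ex (delta/2 * T) ltac:(nra)) as [L HL].
  destruct (nfloor_ex ((c - d') * T) ltac:(nra)) as [m' Hm'].
  set (X := delta / 2 * T - 1).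
  assert (Hmne : (ne < m)%nat).
  { apply INR_lt. nra. }
  assert (Hm'ne : (ne < m')%nat).
  { apply INR_lt. nra. }
  assert (Hup : lam / g (S m) <= q).
  { assert (H1 := Hgb (S m) ltac:(lia) ltac:(lia)).
    assert (H2 : Rpower ((c + delta/2) * T) alpha <= Rpower (INR (S m)) alpha).
    { apply Rle_Rpower_l; [lra|]. rewrite S_INR. split; nra. }
    assert (H3 : Rpower ((c + delta/2) * T) alpha = ru * lam).
    { rewrite <- Hlam. unfold ru. rewrite Rpower_mult_distr. f_equal. field; lra.
      apply Rdiv_lt_0_compat; lra. nra. }
    assert (H4 : (ru + 1) / 2 * lam <= g (S m)).
    { apply Rle_trans with ((1 - eta) * ru * lam). apply Rmult_le_compat_r; lra.
      rewrite Rmult_assoc, <- H3. apply Rle_trans with ((1 - eta) * Rpower (INR (S m)) alpha).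
      apply Rmult_le_compat_l; [pose proof (Rinv_0_lt_compat ru ltac:(lra)); lra|auto]. apply H1. }
    assert (H5 : 0 < g (S m)) by (apply Hgpos; lia).
    apply Rle_trans with (2 / (ru + 1)); auto.
    apply (Rmult_le_reg_r (g (S m))); auto. unfold Rdiv at 1. rewrite Rmult_assoc, Rinv_l by lra.
    apply (Rmult_le_reg_l ((ru+1)/2)); [lra|].
    replace ((ru + 1) / 2 * (2 / (ru + 1) * g (S m))) with (g (S m)) by (field; lra). nra. }
  assert (Hdn : g m' / lam <= q).
  { assert (H1 := Hgb m' ltac:(lia) ltac:(lia)).
    assert (H2 : Rpower (INR m') alpha <= Rpower ((c - d') * T) alpha).
    { apply Rle_Rpower_l; [lra|]. split; [|lra]. apply lt_0_INR; lia. }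
    assert (H3 : Rpower ((c - d') * T) alpha = rl * lam).
    { rewrite <- Hlam. unfold rl. rewrite Rpower_mult_distr. f_equal. field; lra.
      apply Rdiv_lt_0_compat; lra. nra. }
    assert (H4 : g m' <= (1 + rl) / 2 * lam).
    { apply Rle_trans with ((1 + eta) * Rpower (INR m') alpha). apply H1.
      apply Rle_trans with ((1 + eta) * (rl * lam)). apply Rmult_le_compat_l; [lra|]. rewrite <- H3; auto.
      rewrite <- Rmult_assoc. apply Rmult_le_compat_r; lra. }
    apply Rle_trans with ((1 + rl)/2); auto.
    apply (Rmult_le_reg_r lam); auto. unfold Rdiv at 1. rewrite Rmult_assoc, Rinv_l by lra. lra. }
  assert (HA : forall n, Rabs (/ T * INR n - c) >= delta -> (c+delta)*T <= INR n \/ INR n <= (c-delta)*T).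
  { intros n Hn. assert (HTT : T * / T = 1) by (field; lra).
    assert (Hy : INR n = T * (/ T * INR n)) by (field; lra).
    set (y := / T * INR n) in *.
    unfold Rabs in Hn. destruct Rcase_abs in Hn; [right|left]; rewrite Hy.
    - assert (y <= c - delta) by lra. nra.
    - assert (c + delta <= y) by lra. nra. }
  assert (HX0 : 0 <= X) by (unfold X; lra).
  assert (HXL : X <= INR L) by (unfold X; lra).
  assert (HmL : INR m + INR L <= (c + delta) * T) by lra.
  assert (Hm'X : (c - delta) * T + X <= INR m') by (unfold X; nra).
  destruct (core g (fun n => Rabs (/ T * INR n - c) >= delta) lam c delta T q X m L m'
     Hgpos Hmono Hlp Hq HX0 Hup Hdn HXL HmL Hm'X ltac:(lia) ltac:(lia) HA) as [HP0 HP].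
  destruct HP0 as [HP0|HP0]; [right|left; auto].
  split; auto.
  set (P := Prob g lam (fun n => Rabs (/ T * INR n - c) >= delta)) in *.
  set (Y := INR (m + L) + D) in *.
  assert (HY : Y <= (c + delta) * T + D) by (unfold Y; rewrite plus_INR; lra).
  assert (HYp : 0 < Y) by (unfold Y; pose proof (pos_INR (m+L)); lra).
  assert (HlnP : ln P <= X * ln q + ln Y).
  { rewrite <- ln_Rpower, <- ln_mult by (auto; apply Rpower_pos). apply ln_le; auto. }
  assert (HlnY := ln_tangent Y W HYp HW).
  assert (HYW : Y / W <= a * delta / 4 * T + D / W).
  { rewrite <- HWc. unfold Rdiv. replace ((c + delta) * / W * T + D * / W) with (((c+delta) * T + D) * / W) by ring.
    apply Rmult_le_compat_r; auto. apply Rlt_le, Rinv_0_lt_compat; auto. }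
  assert (Hfin : ln P <= - b * T).
  { assert (X * ln q = - a * X) by (unfold a; ring). unfold X in *. unfold A0, b in *. nra. }
  assert (Hpw : Rpower (INR N) (- r0) * T = Rpower (INR N) (s - r0)).
  { unfold T. rewrite <- Rpower_plus. f_equal. ring. }
  assert (Hr : 0 < Rpower (INR N) (- r0)) by apply Rpower_pos.
  apply Rle_trans with (Rpower (INR N) (- r0) * (- b * T)).
  apply Rmult_le_compat_l; lra.
  replace (Rpower (INR N) (- r0) * (- b * T)) with (- b * (Rpower (INR N) (- r0) * T)) by ring.
  rewrite Hpw.
  apply (Rmult_le_compat_l b) in HMb; [|lra].
  replace (b * (- M / b)) with (- M) in HMb by (field; lra). lra.
Qed.
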